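(* Let $[\cdot]_{\mathbb{C}}:\mathbb{H}^d\to\mathbb{C}^{2d}$, $z+wj\mapsto\begin{pmatrix}z\\ \bar w\end{pmatrix}$, and let $v_1,\dots,v_n\in\mathbb{H}^d$. (1) If $([v_1]_{\mathbb{C}},\dots,[v_n]_{\mathbb{C}})$ is a tight frame for $\mathbb{C}^{2d}$, then $(v_1,\dots,v_n)$ is a tight frame for $\mathbb{H}^d$. (2) If $(v_1,\dots,v_n)$ is a tight frame for $\mathbb{H}^d$, then $([v_j]_{\mathbb{C}})_{j=1}^n$ is a tight frame for $\mathbb{C}^{2d}$ if and only if $$\sum_j\sum_k|\operatorname{Co}_1(\langle v_j,v_k\rangle)|^2=\sum_j\sum_k|\operatorname{Co}_2(\langle v_j,v_k\rangle)|^2.$$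
   Context: Every quaternion (and entrywise every quaternionic vector) is written uniquely as $z+wj$ with $z,w$ complex. For $q=z+wj\in\mathbb{H}$, $\operatorname{Co}_1(q)=z$ and $\operatorname{Co}_2(q)=\bar w$, so $|q|^2=|\operatorname{Co}_1(q)|^2+|\operatorname{Co}_2(q)|^2$. $\mathbb{H}^d$ is a right vector space; inner products are Euclidean, $\langle v,w\rangle=\sum_j\overline{w_j}v_j$. A sequence $(u_j)$ is a tight frame for $\mathbb{F}^D$ if there is $A>0$ with $A\|u\|^2=\sum_j|\langle u,u_j\rangle|^2$ for all $u\in\mathbb{F}^D$. *)

(* Defs.v *)
From HB Require Import structures.
From mathcomp Require Import all_boot all_order all_algebra.
From mathcomp Require Export complex.
Set Implicit Arguments. Unset Strict Implicit. Unset Printing Implicit Defensive.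
Import Order.TTheory GRing.Theory Num.Theory.
Local Open Scope ring_scope.
Local Open Scope complex_scope.

Section Quat.
Variable R : rcfType.

Definition cabs2 (c : R[i]) : R := (complex.Re c) ^+ 2 + (complex.Im c) ^+ 2.

(* A quaternion z + w j, with z w complex. *)
Record quat := Quat { qz : R[i]; qw : R[i] }.

Definition Co1 (q : quat) : R[i] := qz q.
Definition Co2 (q : quat) : R[i] := (qw q)^*.

Definition qabs2 (q : quat) : R := cabs2 (Co1 q) + cabs2 (Co2 q).

Definition qadd (p q : quat) : quat := Quat (qz p + qz q) (qw p + qw q).
Definition qzero : quat := Quat 0 0.
(* (z1 + w1 j)(z2 + w2 j) = (z1 z2 - w1 conj w2) + (z1 w2 + w1 conj z2) j,
   using j z = (conj z) j and j^2 = -1. *)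
Definition qmul (p q : quat) : quat :=
  Quat (qz p * qz q - qw p * (qw q)^*) (qz p * qw q + qw p * (qz q)^*).
Definition qconj (q : quat) : quat := Quat (qz q)^* (- qw q).

Definition qinner (d : nat) (v w : 'I_d -> quat) : quat :=
  foldr qadd qzero [seq qmul (qconj (w i)) (v i) | i <- enum 'I_d].
Definition qnorm2 (d : nat) (v : 'I_d -> quat) : R := \sum_(i < d) qabs2 (v i).

Definition cinner (D : nat) (v w : 'I_D -> R[i]) : R[i] :=
  \sum_(i < D) (w i)^* * v i.
Definition cnorm2 (D : nat) (v : 'I_D -> R[i]) : R := \sum_(i < D) cabs2 (v i).

Definition qtight_frame (d n : nat) (u : 'I_n -> 'I_d -> quat) : Prop :=
  exists A : R, 0 < A /\ forall x : 'I_d -> quat,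
    A * qnorm2 x = \sum_(j < n) qabs2 (qinner x (u j)).
Definition ctight_frame (D n : nat) (u : 'I_n -> 'I_D -> R[i]) : Prop :=
  exists A : R, 0 < A /\ forall x : 'I_D -> R[i],
    A * cnorm2 x = \sum_(j < n) cabs2 (cinner x (u j)).

(* [z + w j]_C = (z ; conj w) in C^(2d), first d coordinates z, last d conj w *)
Definition toC (d : nat) (v : 'I_d -> quat) : 'I_(d + d) -> R[i] :=
  fun i => match split i with
           | inl a => Co1 (v a)
           | inr b => Co2 (v b)
           end.
End Quat.

(* Main.v *)
Require Import Defs.
From mathcomp Require Import all_boot all_order all_algebra.
From mathcomp Require Import complex ring lra.
Import Order.TTheory GRing.Theory Num.Theory.
Local Open Scope ring_scope.
Set Implicit Arguments. Unset Strict Implicit.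

Section S.
Variable R : rcfType.
Implicit Types (c : R[i]).
Definition rc (r : R) : R[i] := real_complex R r.
Lemma conjE c : c^* = conjc c. Proof. by []. Qed.
Lemma cabs2C c : rc (cabs2 c) = c * c^*.
Proof. rewrite conjE. case: c => a b; rewrite /cabs2 /rc /=. apply/eqP; rewrite eq_complex /=; apply/andP; split; apply/eqP; ring. Qed.
Lemma rcD : {morph rc : x y / x + y}. Proof. exact: rmorphD. Qed.
Lemma rcM : {morph rc : x y / x * y}. Proof. exact: rmorphM. Qed.
Lemma rcB : {morph rc : x y / x - y}. Proof. exact: rmorphB. Qed.
Lemma rc_sum (I : Type) (s : seq I) (F : I -> R) :
  rc (\sum_(i <- s) F i) = \sum_(i <- s) rc (F i).
Proof. exact: rmorph_sum. Qed.
Lemma rc_nat k : rc k%:R = k%:R. Proof. exact: rmorph_nat. Qed.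
Lemma rcI : injective rc. Proof. exact: complexI. Qed.
Lemma rc_conj r : (rc r)^* = rc r. Proof. by rewrite conjE /rc conjc_real. Qed.
Lemma cabs2_ge0 c : 0 <= cabs2 c.
Proof. by rewrite /cabs2 addr_ge0 // sqr_ge0. Qed.
Lemma cabs2_conj c : cabs2 c^* = cabs2 c.
Proof. by case: c => a b; rewrite /cabs2 conjE /= sqrrN. Qed.
Lemma cabs2_conjc c : cabs2 (conjc c) = cabs2 c.
Proof. exact: cabs2_conj. Qed.
Lemma cabs2N c : cabs2 (- c) = cabs2 c.
Proof. by case: c => a b; rewrite /cabs2 /= !sqrrN. Qed.
Lemma cabs2_eq0 c : cabs2 c = 0 -> c = 0.
Proof. move=> h; have : rc (cabs2 c) = 0 by rewrite h /rc rmorph0.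
rewrite cabs2C => /eqP; rewrite mulf_eq0 conjC_eq0 orbb => /eqP //. Qed.

Variable d : nat.
Implicit Types (x u : 'I_d -> quat R).

Lemma toCl x a : toC x (lshift d a) = Co1 (x a).
Proof. by rewrite /toC -[lshift d a]/(unsplit (inl a)) unsplitK. Qed.
Lemma toCr x a : toC x (rshift d a) = Co2 (x a).
Proof. by rewrite /toC -[rshift d a]/(unsplit (inr a)) unsplitK. Qed.

Lemma foldr_qadd (I : Type) (s : seq I) (f : I -> quat R) :
  foldr (@qadd R) (qzero R) [seq f i | i <- s] =
  Quat (\sum_(i <- s) qz (f i)) (\sum_(i <- s) qw (f i)).
Proof. elim: s => [|a s IH] /=; first by rewrite !big_nil.
by rewrite IH !big_cons. Qed.

Lemma qinnerE x u : qinner x u =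
  Quat (\sum_(i < d) ((qz (u i))^* * qz (x i) + qw (u i) * (qw (x i))^*))
       (\sum_(i < d) ((qz (u i))^* * qw (x i) - qw (u i) * (qz (x i))^*)).
Proof.
rewrite /qinner foldr_qadd !big_enum /=; congr Quat; apply: eq_bigr => i _ /=;
by rewrite ?mulNr ?opprK.
Qed.

Definition Jq x := fun a => Quat (qw (x a)) (- qz (x a)).

Lemma Co1_qinner x u : Co1 (qinner x u) = cinner (toC x) (toC u).
Proof.
rewrite qinnerE /cinner big_split_ord /= -big_split /=; apply: eq_bigr => i _.
by rewrite !toCl !toCr /Co1 /Co2 -!conjE conjCK mulrC.
Qed.

Lemma Co2_qinner x u : Co2 (qinner x u) = (cinner (toC (Jq x)) (toC u))^*.
Proof.
rewrite qinnerE /cinner big_split_ord /= -big_split /= /Co2 /=; congr (_^*); apply: eq_bigr => i _.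
rewrite !toCl !toCr /Co1 /Co2 /Jq /= -!conjE conjCK rmorphN. ring.
Qed.

Lemma qabs2E x u : qabs2 (qinner x u) =
  cabs2 (cinner (toC x) (toC u)) + cabs2 (cinner (toC (Jq x)) (toC u)).
Proof. by rewrite /qabs2 Co1_qinner Co2_qinner cabs2_conj. Qed.

Lemma qnorm2E x : qnorm2 x = cnorm2 (toC x).
Proof. rewrite /cnorm2 big_split_ord /= -big_split /=; apply: eq_bigr => i _.
by rewrite !toCl !toCr. Qed.

Lemma qnorm2J x : qnorm2 (Jq x) = qnorm2 x.
Proof. apply: eq_bigr => i _. rewrite /qabs2 /Co1 /Co2 /Jq /=.
by rewrite cabs2_conjc cabs2N cabs2_conjc addrC. Qed.

End S.



Section G.
Variable R : rcfType.
Variables (D n : nat) (u : 'I_n -> 'I_D -> R[i]).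
Definition sm p q := \sum_(j < n) u j p * (u j q)^*.

Lemma sm_conj p q : (sm p q)^* = sm q p.
Proof. rewrite /sm rmorph_sum; apply: eq_bigr => j _. by rewrite rmorphM /= conjCK mulrC. Qed.

Lemma sm_diag p : sm p p = rc (\sum_(j < n) cabs2 (u j p)).
Proof. rewrite rc_sum; apply: eq_bigr => j _; by rewrite cabs2C. Qed.

Lemma Qexp (y : 'I_D -> R[i]) :
  rc (\sum_(j < n) cabs2 (cinner y (u j))) =
  \sum_(p < D) \sum_(q < D) y p * (y q)^* * sm q p.
Proof.
rewrite rc_sum.
transitivity (\sum_(j < n) \sum_(p < D) \sum_(q < D) y p * (y q)^* * (u j q * (u j p)^*)).
  apply: eq_bigr => j _; rewrite cabs2C /cinner rmorph_sum big_distrl /=.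
  apply: eq_bigr => p _; rewrite big_distrr /=; apply: eq_bigr => q _.
  rewrite rmorphM /= conjCK; ring.
rewrite exchange_big /=; apply: eq_bigr => p _; rewrite exchange_big /=.
apply: eq_bigr => q _; rewrite /sm big_distrr /=; done.
Qed.

Lemma sum_delta (F : 'I_D -> R[i]) p : \sum_(q < D) F q * (p == q)%:R = F p.
Proof.
rewrite (bigD1 p) //= eqxx mulr1 big1 ?addr0 // => q; rewrite eq_sym => /negbTE ->.
by rewrite mulr0.
Qed.
End G.


Section G.
Variable R : rcfType.
Variables (D n : nat) (u : 'I_n -> 'I_D -> R[i]).

Lemma tight_of (c T X : R) :
  \sum_(j < n) cnorm2 (u j) = T ->
  \sum_(j < n) \sum_(k < n) cabs2 (cinner (u j) (u k)) = X ->
  X - (c + c) * T + c ^+ 2 * D%:R = 0 ->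
  forall y, c * cnorm2 y = \sum_(j < n) cabs2 (cinner y (u j)).
Proof.
move=> HT HX Hc.
have K : rc X = \sum_(p < D) \sum_(q < D) sm u p q * (sm u p q)^*.
  rewrite -HX rc_sum.
  transitivity (\sum_(j < n) \sum_(p < D) \sum_(q < D) u j p * (u j q)^* * sm u q p).
    by apply: eq_bigr => j _; rewrite Qexp.
  rewrite exchange_big /=; apply: eq_bigr => p _; rewrite exchange_big /=.
  apply: eq_bigr => q _; rewrite -big_distrl /= sm_conj //.
have Tr : \sum_(p < D) rc (\sum_(j < n) cabs2 (u j p)) = rc T.
  by rewrite -HT /cnorm2 exchange_big rc_sum.
pose m p q := sm u p q - rc c * (p == q)%:R.
have Et : forall p q, rc (cabs2 (m p q)) = sm u p q * (sm u p q)^*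
    - rc c * ((sm u p q)^* + sm u p q) * (p == q)%:R + rc c ^+ 2 * (p == q)%:R.
  move=> p q; rewrite cabs2C /m rmorphB rmorphM /= rc_conj conjC_nat.
  by case: (p == q) => /=; ring.
have E : rc (\sum_(p < D) \sum_(q < D) cabs2 (m p q)) = 0.
  rewrite rc_sum (eq_bigr (fun p => \sum_(q < D) sm u p q * (sm u p q)^*
    - rc c * (rc (\sum_(j < n) cabs2 (u j p)) + rc (\sum_(j < n) cabs2 (u j p))) + rc c ^+ 2)).
    rewrite big_split sumrB /= -K -mulr_sumr big_split /= Tr sumr_const card_ord.
    have -> : rc X - rc c * (rc T + rc T) + rc c ^+ 2 *+ D = rc (X - (c + c) * T + c ^+ 2 * D%:R).
      have rcX : rc (c ^+ 2) = rc c ^+ 2 by exact: rmorphXn.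
      rewrite rcD rcB !rcM !rcD ?rcX rc_nat mulr_natr; ring.
    by rewrite Hc /rc rmorph0.
  move=> p _; rewrite rc_sum (eq_bigr _ (fun q _ => Et p q)) big_split sumrB /=.
  by rewrite !sum_delta -sm_diag [(sm u p p)^*]sm_conj.
have Z : forall p q, m p q = 0.
  have E0 : \sum_(p < D) \sum_(q < D) cabs2 (m p q) = 0.
    by apply: rcI; rewrite E /rc rmorph0.
  move=> p q; apply: cabs2_eq0.
  have := psumr_eq0P (fun p _ => sumr_ge0 _ (fun q _ => cabs2_ge0 (m p q))) E0 (erefl true).
  move=> H; exact: (psumr_eq0P (fun q _ => cabs2_ge0 (m p q)) (H p) (erefl true)).
move=> y; apply: rcI; rewrite Qexp rcM /cnorm2 rc_sum mulr_sumr.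
apply: eq_bigr => p _.
rewrite (eq_bigr (fun q => y p * (y q)^* * (rc c * (p == q)%:R))); last first.
  by move=> q _; have := Z q p; rewrite /m => /eqP; rewrite subr_eq0 => /eqP ->; rewrite (eq_sym q).
rewrite (eq_bigr (fun q => (y p * (y q)^* * rc c) * (p == q)%:R)); last by move=> q _; rewrite mulrA.
by rewrite sum_delta cabs2C mulrC.
Qed.
End G.


Section B.
Variable R : rcfType.
Variable d : nat.
Definition ea (a : 'I_d) : 'I_d -> quat R := fun b => Quat ((b == a)%:R) 0.

Lemma sum_delta_d (F : 'I_d -> R[i]) a : \sum_(b < d) F b * (b == a)%:R = F a.
Proof.
rewrite (bigD1 a) //= eqxx mulr1 big1 ?addr0 // => q /negbTE ->.
by rewrite mulr0.
Qed.

Lemma qabs2_ea a (w : 'I_d -> quat R) : qabs2 (qinner (ea a) w) = qabs2 (w a).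
Proof.
rewrite qinnerE /ea /=.
have -> : \sum_(b < d) ((qz (w b))^* * (b == a)%:R + qw (w b) * 0^*) = (qz (w a))^*.
  rewrite -(sum_delta_d (fun b => (qz (w b))^*) a); apply: eq_bigr => b _.
  by rewrite conjC0 mulr0 addr0.
have -> : \sum_(b < d) ((qz (w b))^* * 0 - qw (w b) * ((b == a)%:R)^*) = - qw (w a).
  rewrite -(sum_delta_d (fun b => - qw (w b)) a); apply: eq_bigr => b _.
  by rewrite mulr0 conjC_nat add0r mulNr.
rewrite /qabs2 /Co1 /Co2 /=.
by rewrite cabs2_conj cabs2_conjc cabs2N cabs2_conjc.
Qed.

Lemma qnorm2_ea a : qnorm2 (ea a) = 1.
Proof.
rewrite /qnorm2 (bigD1 a) //= big1 ?addr0.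
  by rewrite /qabs2 /Co1 /Co2 /ea /= eqxx /cabs2 /= oppr0 expr1n expr0n /= !addr0.
move=> b /negbTE; rewrite /qabs2 /Co1 /Co2 /ea /= => ->.
by rewrite /cabs2 /= oppr0 expr0n /= !addr0.
Qed.
End B.


Lemma hard (R : rcfType) (d n : nat) (v : 'I_n -> 'I_d -> quat R) (A : R) :
  0 < A -> (forall x, A * qnorm2 x = \sum_(j < n) qabs2 (qinner x (v j))) ->
     \sum_(j < n) \sum_(k < n) cabs2 (Co1 (qinner (v j) (v k)))
     = \sum_(j < n) \sum_(k < n) cabs2 (Co2 (qinner (v j) (v k))) ->
  ctight_frame (fun j => toC (v j)).
Proof.
move=> A0 HA H2.
set T := \sum_(j < n) cnorm2 (toC (v j)).
set X := \sum_(j < n) \sum_(k < n) cabs2 (cinner (toC (v j)) (toC (v k))).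
have HT : T = d%:R * A.
  transitivity (\sum_(a < d) A * qnorm2 (ea R a)); last first.
    by rewrite (eq_bigr (fun _ => A)) ?sumr_const ?card_ord ?mulr_natl // => a _; rewrite qnorm2_ea mulr1.
  rewrite (eq_bigr (fun a => \sum_(j < n) qabs2 (v j a))); last first.
    by move=> a _; rewrite HA; apply: eq_bigr => j _; rewrite qabs2_ea.
  rewrite exchange_big /T; apply: eq_bigr => j _; by rewrite -qnorm2E.
have HX : X + X = A * T.
  rewrite /T mulr_sumr.
  rewrite (eq_bigr (fun j => \sum_(k < n) qabs2 (qinner (v j) (v k)))); last first.
    by move=> j _; rewrite -qnorm2E HA.
  rewrite /qabs2 (eq_bigr (fun j => \sum_(k < n) cabs2 (Co1 (qinner (v j) (v k))) +
      \sum_(k < n) cabs2 (Co2 (qinner (v j) (v k))))); last by move=> j _; rewrite big_split.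
  rewrite big_split /= -H2 /X; congr (_ + _); apply: eq_bigr => j _; apply: eq_bigr => k _;
  by rewrite Co1_qinner.
exists (A / 2); split; first by rewrite divr_gt0.
apply: (tight_of (T := T) (X := X)) => //.
have -> : X = A * T / 2.
  by rewrite -HX; field.
by rewrite HT natrD; field.
Qed.

Theorem theorem10 (R : rcfType) (d n : nat) (v : 'I_n -> 'I_d -> quat R) :
  (ctight_frame (fun j => toC (v j)) -> qtight_frame v) /\
  (qtight_frame v ->
    (ctight_frame (fun j => toC (v j)) <->
     \sum_(j < n) \sum_(k < n) cabs2 (Co1 (qinner (v j) (v k)))
     = \sum_(j < n) \sum_(k < n) cabs2 (Co2 (qinner (v j) (v k))))).
Proof.
split.
  case=> A [A0 HA]; exists (A + A); split; first by rewrite addr_gt0.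
  move=> x; rewrite (eq_bigr _ (fun j _ => qabs2E x (v j))) big_split /=.
  by rewrite -!HA -qnorm2E -qnorm2E qnorm2J mulrDl.
move=> [A [A0 HA]]; split.
  case=> B [B0 HB].
  transitivity (\sum_(j < n) B * cnorm2 (toC (v j))).
    by apply: eq_bigr => j _; rewrite HB; apply: eq_bigr => k _; rewrite Co1_qinner.
  apply: eq_bigr => j _; rewrite -qnorm2E -(qnorm2J (v j)) qnorm2E HB.
  by apply: eq_bigr => k _; rewrite Co2_qinner cabs2_conj.
move=> H2; exact: (hard A0 HA H2).
Qed.
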